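(* Let $N\ge 2$, $C\ge 0$, $k\ge 1$ and $L\ge 1$ be integers with $C<\frac{N-1}{2}$, $k\le N-1$, and $$\binom{N-1-C}{k}\ \ge\ \frac{1}{2}\binom{N-1}{k}.$$ Let $\mathcal{A}\subseteq\mathbb{R}^L$, $\mathcal{O}$, $\mathcal{M}$ be action, observation and message spaces, and $\hat{\pi}:\mathcal{O}\times\mathcal{M}^k\to\mathcal{A}$ any function. Fix $o\in\mathcal{O}$ and $\mathbf{m}_{\mathrm{benign}},\mathbf{m}_{\mathrm{adv}}\in\mathcal{M}^{N-1}$ differing in at most $C$ coordinates, and let $$\mathcal{A}_{\mathrm{benign}}:=\bigcup_{T\in\mathcal{H}(N-1,k)}\{\hat{\pi}(o,\mathsf{Ablate}(\mathbf{m}_{\mathrm{benign}},T))\}.$$ Let $0<D\le\binom{N-1}{k}$ and let $T_1,\dots,T_D$ be $D$ distinct elements of $\mathcal{H}(N-1,k)$ chosen uniformly at random without replacement. Define $$\widetilde{\pi}_D(o,\mathbf{m}_{\mathrm{adv}}):=\mathsf{Median}\{\hat{\pi}(o,\mathsf{Ablate}(\mathbf{m}_{\mathrm{adv}},T_d))\}_{d=1}^D$$ (coordinate-wise median). Then, with probability at least $$p_D=\frac{\sum_{j=\tilde{D}}^{D}\binom{n_2}{j}\binom{n_1-n_2}{D-j}}{\binom{n_1}{D}},\qquad n_1=\binom{N-1}{k},\ n_2=\binom{N-C-1}{k},\ \tilde{D}=\lfloor D/2\rfloor+1,$$ it holds that $$\widetilde{\pi}_D(o,\mathbf{m}_{\mathrm{adv}})\in\mathsf{Range}(\mathcal{A}_{\mathrm{benign}}):=\{a\in\mathbb{R}^L:\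 \forall\,1\le l\le L,\ \exists\,\underline{a},\overline{a}\in\mathcal{A}_{\mathrm{benign}}\text{ with }\underline{a}_l\le a_l\le\overline{a}_l\}.$$
   Context: For a list $\mathbf{m}=[m_1,\dots,m_n]$ and $T=\{j_1<\dots<j_k\}\subseteq[n]$, $\mathsf{Ablate}(\mathbf{m},T):=[m_{j_1},\dots,m_{j_k}]$. $\mathcal{H}(n,k)$ is the set of all $k$-element subsets of $\{1,\dots,n\}$. $\mathsf{Median}$ of a list of vectors in $\mathbb{R}^L$ is the coordinate-wise median. Setting: an agent receives $N-1$ messages, of which an adversary may corrupt up to $C$, so the received list $\mathbf{m}_{\mathrm{adv}}$ differs from the uncorrupted list $\mathbf{m}_{\mathrm{benign}}$ in at most $C$ positions. Binomial coefficients $\binom{a}{b}$ with $b>a$ or $b<0$ are $0$. *)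

(* Defs.v *)
From mathcomp Require Import all_boot all_order all_algebra.
Set Implicit Arguments. Unset Strict Implicit. Unset Printing Implicit Defensive.
Import Order.TTheory GRing.Theory Num.Theory.
Local Open Scope ring_scope.

(* Messages are indexed by 'I_n = {0,...,n-1} (0-based version of [n]). *)

(* Ablate(m, T): the messages m_j, j in T, listed in increasing order of j
   (enum of a set of ordinals lists its elements in increasing order). *)
Definition ablate (M : Type) (n : nat) (m : 'I_n -> M) (T : {set 'I_n}) : seq M :=
  [seq m j | j <- enum T].

Definition Hset (n k : nat) : {set {set 'I_n}} := [set T : {set 'I_n} | #|T| == k].

Definition median (R : realFieldType) (s : seq R) : R :=
  let t := sort <=%R s in
  let n := size t in
  if odd n then nth 0 t n./2
  else (nth 0 t n./2.-1 + nth 0 t n./2) / 2%:R.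

Definition vmedian (R : realFieldType) (L : nat) (vs : seq 'rV[R]_L) : 'rV[R]_L :=
  \row_(l < L) median [seq (v : 'rV[R]_L) 0 l | v <- vs].

Definition inRange (R : realFieldType) (L : nat) (A : seq 'rV[R]_L) (a : 'rV[R]_L) : bool :=
  [forall l : 'I_L, has (fun lo : 'rV[R]_L => lo 0 l <= a 0 l) A
                    && has (fun hi : 'rV[R]_L => a 0 l <= hi 0 l) A].

Definition Abenign (R : realFieldType) (L : nat) (O M : Type)
  (pihat : O -> seq M -> 'rV[R]_L) (o : O) (n k : nat) (mb : 'I_n -> M) : seq 'rV[R]_L :=
  [seq pihat o (ablate mb T) | T <- enum (Hset n k)].

(* An ordered draw (T_1,...,T_D) of D distinct elements of H(n,k). *)
Definition valid_draw (n k D : nat) (f : {ffun 'I_D -> {set 'I_n}}) : bool :=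
  injectiveb f && [forall d, f d \in Hset n k].

Definition pi_tilde (R : realFieldType) (L : nat) (O M : Type)
  (pihat : O -> seq M -> 'rV[R]_L) (o : O) (n D : nat) (ma : 'I_n -> M)
  (f : {ffun 'I_D -> {set 'I_n}}) : 'rV[R]_L :=
  vmedian [seq pihat o (ablate ma (f d)) | d <- enum 'I_D].

Definition pD (R : realFieldType) (n1 n2 D : nat) : R :=
  (\sum_(D./2.+1 <= j < D.+1) ('C(n2, j) * 'C(n1 - n2, D - j))%N)%:R / ('C(n1, D))%:R.

(* Main.v *)
Require Import Defs.
From mathcomp Require Import all_boot all_order all_algebra.
From mathcomp Require Import zify ring lra.
Import Order.TTheory GRing.Theory Num.Theory.
Set Implicit Arguments. Unset Strict Implicit.
Local Open Scope ring_scope.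

Section Med.
Variable R : realFieldType.

Lemma sorted_nth_le (t : seq R) i j : sorted <=%R t -> (i <= j < size t)%N ->
  nth 0 t i <= nth 0 t j.
Proof.
move=> st /andP[ij jt].
apply: (sorted_leq_nth le_trans lexx 0 st) => //; rewrite inE //.
exact: leq_ltn_trans ij jt.
Qed.

Lemma count_gt_nth (t : seq R) i : sorted <=%R t -> (i < size t)%N ->
  leq (count (fun x => nth 0 t i < x) t) (size t - i.+1)%N.
Proof.
move=> st it.
rewrite -[t in count _ t](cat_take_drop i.+1) count_cat.
have -> : count (fun x => nth 0 t i < x) (take i.+1 t) = 0%N.
  apply/eqP; rewrite -leqn0 leqNgt -has_count; apply/negP => /(has_nthP 0) [j].
  have hj : forall j, (j < size (take i.+1 t))%N -> (j < i.+1)%N.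
    move=> j0; rewrite size_take; case: (ltnP i.+1 (size t)) => H1 H2; lia.
  move=> jt; rewrite nth_take ?hj // ltNge.
  by rewrite sorted_nth_le // -ltnS hj.
by rewrite add0n (leq_trans (count_size _ _)) // size_drop.
Qed.

Lemma count_lt_nth (t : seq R) i : sorted <=%R t -> (i < size t)%N ->
  leq (count (fun x => x < nth 0 t i) t) i.
Proof.
move=> st it.
rewrite -[t in count _ t](cat_take_drop i) count_cat.
have -> : count (fun x => x < nth 0 t i) (drop i t) = 0%N.
  apply/eqP; rewrite -leqn0 leqNgt -has_count; apply/negP => /(has_nthP 0) [j].
  rewrite size_drop => jt; rewrite nth_drop ltNge.
  by rewrite sorted_nth_le // leq_addr /= -ltn_subRL.
by rewrite addn0 (leq_trans (count_size _ _)) // size_take; case: ltnP.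
Qed.

Lemma median_bounds (s : seq R) :
  leq (count (fun x => median s < x) s) (size s)./2 /\
  leq (count (fun x => x < median s) s) (size s)./2.
Proof.
rewrite /median.
set t := sort _ s.
have st : sorted <=%R t by apply: sort_sorted; exact: le_total.
have pt : perm_eq t s by rewrite perm_sort.
have cE : forall P, count P s = count P t by move=> P; rewrite (permP pt).
have sE : size t = size s by rewrite size_sort.
rewrite !cE -sE.
case: ifP => od.
  have ht : ((size t)./2 < size t)%N.
    rewrite -{2}(odd_double_half (size t)) od; lia.
  split; last exact: count_lt_nth.
  apply: leq_trans (count_gt_nth st ht) _.
  rewrite -{1}(odd_double_half (size t)) od /=.
  lia.
case E: (size t) => [|n]; first by split; apply: leq_trans (count_size _ _) _; rewrite E.
have hd := odd_double_half (size t); rewrite od add0n in hd.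
have h1 : ((size t)./2.-1 < size t)%N by move: hd; rewrite E; lia.
have h2 : ((size t)./2 < size t)%N by move: hd; rewrite E; lia.
have hpos : (0 < (size t)./2)%N by move: hd; rewrite E; lia.
have lem : nth 0 t (size t)./2.-1 <= nth 0 t (size t)./2.
  by apply: sorted_nth_le st _; rewrite leq_pred h2.
rewrite -E; move: lem; set a := nth 0 t _; set b := nth 0 t (size t)./2 => lem.
have am : a <= (a + b) / 2%:R by rewrite ler_pdivlMr ?ltr0n //; lra.
have mb : (a + b) / 2%:R <= b by rewrite ler_pdivrMr ?ltr0n //; lra.
split.
  apply: leq_trans (sub_count _ _) _ ; last first.
    apply: leq_trans (count_gt_nth st h1) _.
    rewrite -{1}(odd_double_half (size t)) od add0n.
    move: hpos; lia.
  by move=> x /= H; apply: le_lt_trans am H.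
apply: leq_trans (sub_count _ _) _ ; last exact: (count_lt_nth st h2).
by move=> x /= H; apply: lt_le_trans H mb.
Qed.
End Med.

Section Comb.
Local Open Scope nat_scope.
Variable X : finType.
Variables H G : {set X}.
Hypothesis GH : G \subset H.

Lemma split_UG (A B : {set X}) : A \subset G -> B \subset H :\: G ->
  (A :|: B) :&: G = A /\ (A :|: B) :\: G = B.
Proof.
move=> /subsetP sA /subsetP sB; split; apply/setP => x; rewrite !inE;
have := sA x; have := sB x; rewrite !inE;
case: (x \in A); case: (x \in B); case: (x \in G); case: (x \in H) => //= h1 h2;
  (try by rewrite h1 ?andbT); (try by have := h2 isT); by have := h1 isT.
Qed.

Lemma card_Yj (D j : nat) : (j <= D)%N ->
  #|[set Y : {set X} | [&& Y \subset H, #|Y| == D & #|Y :&: G| == j]]|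
  = 'C(#|G|, j) * 'C(#|H| - #|G|, D - j).
Proof.
move=> jD.
pose Pr := setX [set A : {set X} | A \subset G & #|A| == j]
                [set B : {set X} | B \subset H :\: G & #|B| == D - j].
have cPr : #|Pr| = 'C(#|G|, j) * 'C(#|H| - #|G|, D - j).
  rewrite cardsX !cards_draws cardsD (setIidPr GH) //.
have -> : [set Y : {set X} | [&& Y \subset H, #|Y| == D & #|Y :&: G| == j]]
    = (fun p => p.1 :|: p.2) @: Pr.
  apply/setP => Y; rewrite inE; apply/idP/imsetP.
    case/and3P => YH /eqP YD /eqP YG.
    exists (Y :&: G, Y :\: G); last by rewrite /= setID.
    rewrite !inE subsetIr YG eqxx /=.
    have := cardsID G Y; rewrite YG YD => e.
    rewrite setSD //= ; apply/eqP; lia.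
  case=> [[A B]]; rewrite !inE /= => /andP[/andP[AG /eqP cA] /andP[BHG /eqP cB]] ->.
  have [e1 e2] := split_UG AG BHG.
  rewrite e1 cA eqxx andbT; apply/andP; split.
    rewrite subUset (subset_trans AG GH) /=.
    by apply: subset_trans BHG _; apply: subsetDl.
  have := cardsID G (A :|: B); rewrite e1 e2 cA cB => <-; apply/eqP; lia.
rewrite card_in_imset // => [[A B]] [A' B']; rewrite !inE /=.
move=> /andP[/andP[AG _] /andP[BHG _]] /andP[/andP[AG' _] /andP[BHG' _]] e.
have [e1 e2] := split_UG AG BHG; have [e1' e2'] := split_UG AG' BHG'.
by have := congr1 (fun Y => (Y :&: G, Y :\: G)) e; rewrite /= e1 e2 e1' e2'.
Qed.

Lemma card_good_draws (D t : nat) :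
  #|[set f : {ffun 'I_D -> X} | [&& injectiveb f, [forall d, f d \in H]
       & (t <= #|[set d | f d \in G]|)%N]]|
  = D`! * \sum_(t <= j < D.+1) 'C(#|G|, j) * 'C(#|H| - #|G|, D - j).
Proof.
have imG : forall f : {ffun 'I_D -> X}, injective f ->
    #|[set d | f d \in G]| = #|(f @: 'I_D) :&: G|.
  move=> f injf; rewrite -(card_imset [set d | f d \in G] injf).
  apply: eq_card => x; apply/imsetP/setIP.
    by case=> d; rewrite inE => fG ->; split => //; apply: imset_f.
  by case=> /imsetP[d _ ->] fG; exists d; rewrite ?inE.
have imD : forall f : {ffun 'I_D -> X}, injective f -> #|f @: 'I_D| = D.
  by move=> f injf; rewrite card_imset // card_ord.
rewrite -sum1dep_card.
rewrite (partition_big (fun f : {ffun 'I_D -> X} => f @: 'I_D)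
   (fun Y => [&& Y \subset H, #|Y| == D & (t <= #|Y :&: G|)%N])) /=; last first.
  move=> f /and3P[/injectiveP injf /forallP fH tG].
  rewrite imD // eqxx -imG // tG andbT.
  by rewrite andbT; apply/subsetP => x /imsetP[d _ ->].
rewrite (eq_bigr (fun _ => 1 * D`!)); last first.
  move=> Y /and3P[YH /eqP YD tY]; rewrite mul1n.
  rewrite sum1dep_card.
  transitivity #|[set f : {ffun 'I_D -> X} in ffun_on Y | injectiveb f]|;
    last by rewrite card_inj_ffuns_on YD card_ord ffactnn.
  apply: eq_card => f; rewrite !inE.
  apply/idP/idP.
    case/andP=> /and3P[/injectiveP injf _ _] /eqP <-; rewrite andbC.
    apply/andP; split; first exact/injectiveP.
    by apply/ffun_onP => d; apply: imset_f.
  case/andP => /ffun_onP fY /injectiveP injf.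
  have eY : f @: 'I_D = Y.
    apply/eqP; rewrite eqEcard imD // YD leqnn andbT.
    by apply/subsetP => x /imsetP[d _ ->].
  rewrite eY eqxx andbT; apply/and3P; split; first exact/injectiveP.
    by apply/forallP => d; apply: (subsetP YH); apply: fY.
  by rewrite imG // eY.
rewrite -big_distrl /= sum1dep_card mulnC; congr (_ * _).
rewrite -sum1dep_card.
rewrite (partition_big (fun Y : {set X} => inord #|Y :&: G| : 'I_D.+1)
   (fun j : 'I_D.+1 => (t <= j)%N)) /=; last first.
  move=> Y /and3P[YH /eqP YD tY]; rewrite inordK //.
  by rewrite ltnS -YD subset_leq_card // subsetIl.
rewrite big_geq_mkord; apply: eq_big => [j|j tj] //.
rewrite sum1dep_card -card_Yj; last by rewrite -ltnS.
apply: eq_card => Y; rewrite !inE.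
apply/idP/idP.
  case/andP => /and3P[YH /eqP YD tY] /eqP <-; rewrite YH YD eqxx /= inordK //.
  by rewrite ltnS -YD subset_leq_card // subsetIl.
case/and3P => YH /eqP YD /eqP YG; rewrite YH YD YG eqxx /=.
by rewrite (leq_trans tj (leqnn _)) /=; apply/eqP/val_inj; rewrite /= inordK // -YG ltnS -YD subset_leq_card // subsetIl.
Qed.
End Comb.

Lemma count_enum_ord D (A : {set 'I_D}) : count (mem A) (enum 'I_D) = #|A|.
Proof. rewrite cardE /enum_mem size_filter count_filter. apply: eq_count => x /=. by rewrite andbT. Qed.

Lemma median_good (R : realFieldType) (D : nat) (g : 'I_D -> R) (A : {set 'I_D}) :
  (D./2 < #|A|)%N ->
  (exists2 d, d \in A & g d <= median [seq g d | d <- enum 'I_D]) /\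
  (exists2 d, d \in A & median [seq g d | d <- enum 'I_D] <= g d).
Proof.
move=> hA; set m := median _.
have [h1 h2] := median_bounds [seq g d | d <- enum 'I_D].
rewrite size_map size_enum_ord -/m in h1 h2.
split.
  case: (pickP [pred d | (d \in A) && (g d <= m)]) => [d /andP[dA gd] | H0]; first by exists d.
  exfalso.
  have : leq #|A| (count (fun x => m < x) [seq g d | d <- enum 'I_D]).
    rewrite count_map -count_enum_ord; apply: sub_count => d /= dA.
    by move: (H0 d); rewrite /= dA /= ltNge => ->.
  lia.
case: (pickP [pred d | (d \in A) && (m <= g d)]) => [d /andP[dA gd] | H0]; first by exists d.
exfalso.
have : leq #|A| (count (fun x => x < m) [seq g d | d <- enum 'I_D]).
  rewrite count_map -count_enum_ord; apply: sub_count => d /= dA.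
  by move: (H0 d); rewrite /= dA /= ltNge => ->.
lia.
Qed.
Theorem theorem3 (R : realFieldType) (N C k L D : nat) (O M : Type)
  (hN : (2 <= N)%N) (hk : (1 <= k)%N) (hL : (1 <= L)%N)
  (hC : (2 * C < N - 1)%N) (hkN : (k <= N - 1)%N)
  (hbin : ('C(N - 1, k) <= 2 * 'C(N - 1 - C, k))%N)
  (pihat : O -> seq M -> 'rV[R]_L) (o : O)
  (mb ma : 'I_(N - 1) -> M)
  (hdiff : exists S : {set 'I_(N - 1)},
      (#|S| <= C)%N /\ forall i, i \notin S -> mb i = ma i)
  (hD : (0 < D)%N) (hDle : (D <= 'C(N - 1, k))%N) :
  pD R 'C(N - 1, k) 'C(N - C - 1, k) D <=
    (#|[set f : {ffun 'I_D -> {set 'I_(N - 1)}} | valid_draw k f &&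
        inRange (Abenign pihat o k mb) (pi_tilde pihat o ma f)]|)%:R
    / (#|[set f : {ffun 'I_D -> {set 'I_(N - 1)}} | valid_draw k f]|)%:R.
Proof.
case: hdiff => S [hS hSe].
set n1 := 'C(N - 1, k).
set Hs := Hset (N - 1) k.
have cHs : #|Hs| = n1 by rewrite /Hs /Hset card_draws card_ord.
set G0 := [set T : {set 'I_(N - 1)} | T \subset ~: S & #|T| == k].
have cG0 : ('C(N - C - 1, k) <= #|G0|)%N.
  rewrite /G0 cards_draws cardsCs setCK card_ord.
  apply: leq_bin2l; lia.
have [G GG0 cG] : exists2 G : {set {set 'I_(N-1)}}, G \subset G0 & #|G| = 'C(N - C - 1, k).
  have : (0 < #|[set B : {set {set 'I_(N-1)}} | B \subset G0 & #|B| == 'C(N - C - 1, k)]|)%N.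
    by rewrite cards_draws bin_gt0.
  by case/card_gt0P => B; rewrite inE => /andP[h1 /eqP h2]; exists B.
have GHs : G \subset Hs.
  apply/subsetP => T /(subsetP GG0); rewrite !inE => /andP[_ ->]; done.
have good : forall T, T \in G -> ablate ma T = ablate mb T.
  move=> T /(subsetP GG0); rewrite inE => /andP[/subsetP TS _].
  rewrite /ablate; apply/eq_in_map => j; rewrite mem_enum => jT.
  by rewrite hSe //; have := TS j jT; rewrite inE.
have key := card_good_draws GHs D D./2.+1.
rewrite cHs cG in key.
have hden : #|[set f : {ffun 'I_D -> {set 'I_(N - 1)}} | valid_draw k f]| = n1 ^_ D.
  transitivity #|[set f : {ffun 'I_D -> {set 'I_(N - 1)}} in ffun_on Hs | injectiveb f]|;
    last by rewrite card_inj_ffuns_on cHs card_ord.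
  apply: eq_card => f; rewrite !inE /valid_draw andbC; congr (_ && _).
set Num := #|[set f : {ffun 'I_D -> {set 'I_(N - 1)}} | valid_draw k f && _]|.
have hnum : (D`! * \sum_(D./2.+1 <= j < D.+1) 'C('C(N - C - 1, k), j) * 'C(n1 - 'C(N - C - 1, k), D - j) <= Num)%N.
  rewrite -key; apply: subset_leq_card; apply/subsetP => f; rewrite !inE.
  case/and3P => inj fH tG.
  have vf : valid_draw k f by rewrite /valid_draw inj.
  rewrite vf /=.
  apply/forallP => l; rewrite /pi_tilde /vmedian mxE -map_comp.
  have [[d1 d1G h1] [d2 d2G h2]] :=
    median_good (fun d => (pihat o (ablate ma (f d))) 0 l) tG.
  rewrite inE in d1G; rewrite inE in d2G.
  apply/andP; split; apply/hasP.
    exists (pihat o (ablate mb (f d1))); last by rewrite -good.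
    rewrite /Abenign; apply/mapP; exists (f d1) => //; rewrite mem_enum.
    exact: (forallP fH).
  exists (pihat o (ablate mb (f d2))); last by rewrite -good.
  rewrite /Abenign; apply/mapP; exists (f d2) => //; rewrite mem_enum.
  exact: (forallP fH).
rewrite hden /pD -bin_ffact natrM.
set Sg := (\sum_(_ <= j < _) _)%N.
have c0 : (0 : R) < ('C(n1, D))%:R by rewrite ltr0n bin_gt0.
have f0 : (0 : R) < (D`!)%:R by rewrite ltr0n fact_gt0.
apply: (@le_trans _ _ ((D`! * Sg)%:R / (('C(n1, D))%:R * (D`!)%:R))).
  rewrite natrM le_eqVlt; apply/orP; left; apply/eqP; field.
  by apply/andP; split; rewrite gt_eqF.
apply: ler_wpM2r; first by rewrite invr_ge0 mulr_ge0 // ltW.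
by rewrite ler_nat.
Qed.
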